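(* Let $K$ be a field, $X$ a finite connected poset, $\varphi$ an elementary Lie automorphism of $I(X,K)$, $\theta=\theta_\varphi$, and $x<y$ with $\theta(e_{xy})=e_{uv}$. Then for all $z\in X$, $$\varphi(e_z)(v,v)-\varphi(e_z)(u,u)=\begin{cases}-1,& z=x,\\ 1,& z=y,\\ 0,& z\notin\{x,y\}.\end{cases}$$
   Context: $I(X,K)$ is the incidence algebra: functions $f:X\times X\to K$ with $f(x,y)=0$ unless $x\le y$, product $(fg)(x,y)=\sum_{x\le t\le y}f(x,t)g(t,y)$; $e_{xy}$ ($x\le y$) is the basis element equal to $1$ at $(x,y)$ and $0$ elsewhere, $e_z=e_{zz}$. $B=\{e_{xy}:x<y\}$. A Lie automorphism is a bijective linear map preserving $[f,g]=fg-gf$. With $l(\lfloor x,y\rfloor)$ the maximal length of a chain in $\{z:x\le z\le y\}$ and $L_i=\mathrm{span}_K\{e_{xy}:l(\lfloor x,y\rfloor)=i\}$, for a Lie automorphism $\psi$ let $\widetilde\psi$ send $e_{xy}\in L_i$ to the $L_i$-component of $\psi(e_{xy})$. A Lie automorphism $\varphi$ is elementary if $\varphi=\widetilde\psi$ for some Lie automorphism $\psi$ (equivalently $\varphi(L_i)\subseteq L_i$ for all $i$). For elementary $\varphi$, for each $x<y$ there are a unique $e_{uv}\in B$ and $k\in K^*$ with $\varphi(e_{xy})=k e_{uv}$; set $\theta_\varphi(e_{xy})=e_{uv}$. Connected means any two elements are joined by a sequence in which consecutive elements are in a covering relation. *)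

(* Defs.v *)
From HB Require Import structures.
From mathcomp Require Import all_boot all_order all_algebra.
Set Implicit Arguments. Unset Strict Implicit. Unset Printing Implicit Defensive.
Import Order.TTheory GRing.Theory.
Local Open Scope ring_scope.

Definition incpred (d : Order.disp_t) (X : finPOrderType d) (K : fieldType)
  : {pred {ffun X * X -> K^o}} :=
  [pred f : {ffun X * X -> K^o} | [forall p : X * X, ~~ (p.1 <= p.2)%O ==> (f p == 0)]].

Lemma incpred_closed d (X : finPOrderType d) (K : fieldType) :
  subsemimod_closed (@incpred d X K).
Proof.
split; [split|].
- by rewrite /incpred inE; apply/forallP => p; rewrite ffunE eqxx implybT.
- move=> u v; rewrite /incpred !inE => /forallP Hu /forallP Hv.
  apply/forallP => p; apply/implyP => Hp.
  have := implyP (Hu p) Hp; have := implyP (Hv p) Hp.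
  by rewrite !ffunE => /eqP -> /eqP ->; rewrite addr0.
- move=> a u; rewrite /incpred !inE => /forallP Hu.
  apply/forallP => p; apply/implyP => Hp.
  have := implyP (Hu p) Hp.
  by rewrite !ffunE => /eqP ->; rewrite scaler0.
Qed.

HB.instance Definition _ d (X : finPOrderType d) (K : fieldType) :=
  GRing.isSubmodClosed.Build K {ffun X * X -> K^o} (@incpred d X K)
    (@incpred_closed d X K).

Record incalg d (X : finPOrderType d) (K : fieldType) :=
  IncAlg { incval :> {ffun X * X -> K^o}; _ : incval \in @incpred d X K }.

HB.instance Definition _ d X K := [isSub for @incval d X K].
HB.instance Definition _ d X K := [Choice of @incalg d X K by <:].
HB.instance Definition _ d X K :=
  [SubChoice_isSubLmodule of @incalg d X K by <:].

Section Incidence.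
Variables (d : Order.disp_t) (X : finPOrderType d) (K : fieldType).
Local Notation I := (@incalg d X K).

Lemma incmul_subproof (f g : I) :
  [ffun p : X * X => if (p.1 <= p.2)%O then
      \sum_(t : X | (p.1 <= t)%O && (t <= p.2)%O) f (p.1, t) * g (t, p.2)
    else 0 : K^o] \in @incpred d X K.
Proof.
rewrite /incpred inE; apply/forallP => p; rewrite ffunE.
by apply/implyP => /negbTE ->.
Qed.

Definition incmul (f g : I) : I := IncAlg (incmul_subproof f g).

Definition lie (f g : I) : I := incmul f g - incmul g f.

(* The basis element e_{xy}: 1 at (x,y), 0 elsewhere (only used for x <= y;
   by convention it is 0 when x <= y fails, so that it is total). *)
Lemma e_subproof (x y : X) :
  [ffun p : X * X => if (p == (x, y)) && (x <= y)%O then 1 else 0 : K^o]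
    \in @incpred d X K.
Proof.
rewrite /incpred inE; apply/forallP => p; rewrite ffunE.
apply/implyP => H; have [E|] := eqVneq p (x, y); last by [].
by move: H; rewrite E /= => /negbTE ->; rewrite ?andbF.
Qed.

Definition e (x y : X) : I := IncAlg (e_subproof x y).
Definition ez (z : X) : I := e z z.

Definition lie_aut (phi : {linear I -> I}) : Prop :=
  bijective phi /\ forall f g : I, phi (lie f g) = lie (phi f) (phi g).

Definition is_chain_in (x y : X) (A : {set X}) : bool :=
  [forall a in A, (x <= a)%O && (a <= y)%O] &&
  [forall a in A, forall b in A, (a <= b)%O || (b <= a)%O].

Definition lint (x y : X) : nat :=
  \max_(A : {set X} | is_chain_in x y A) (#|A|.-1)%N.

(* The L_i-component of an element g of I(X,K), where
   L_i = span {e_xy : x <= y, l(|x,y|) = i}. *)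
Lemma comp_subproof (i : nat) (g : I) :
  [ffun q : X * X => if (q.1 <= q.2)%O && (lint q.1 q.2 == i) then g q else 0 : K^o]
    \in @incpred d X K.
Proof.
rewrite /incpred inE; apply/forallP => p; rewrite ffunE.
by apply/implyP => /negbTE ->.
Qed.

Definition comp (i : nat) (g : I) : I := IncAlg (comp_subproof i g).

Definition tilde (psi : {linear I -> I}) (f : I) : I :=
  \sum_(p : X * X | (p.1 <= p.2)%O)
     (f p : K) *: comp (lint p.1 p.2) (psi (e p.1 p.2)).

Definition elementary (phi : {linear I -> I}) : Prop :=
  lie_aut phi /\ exists psi : {linear I -> I}, lie_aut psi /\ forall f, phi f = tilde psi f.

End Incidence.

Definition covers d (X : finPOrderType d) (a b : X) : bool :=
  (a < b)%O && [forall c : X, ~~ ((a < c)%O && (c < b)%O)].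

Definition poset_connected d (X : finPOrderType d) : Prop :=
  forall a b : X, exists s : seq X,
    path (fun p q : X => covers p q || covers q p) a s && (last a s == b).

(* Main.v *)
Require Import Defs.
From HB Require Import structures.
From mathcomp Require Import all_boot all_order all_algebra.
Import Order.TTheory GRing.Theory.
Local Open Scope ring_scope.

Section S.
Variables (d : Order.disp_t) (X : finPOrderType d) (K : fieldType).
Local Notation I := (@incalg d X K).

Lemma valZ (c : K) (f : I) p : incval (c *: f) p = c * incval f p.
Proof. by rewrite /= ffunE. Qed.
Lemma valB (f g : I) p : incval (f - g) p = incval f p - incval g p.
Proof. by rewrite /= !ffunE. Qed.
Lemma vale (x y : X) p : incval (e K x y) p = if (p == (x,y)) && (x <= y)%O then 1 else 0.
Proof. by rewrite /= ffunE. Qed.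
Lemma valmul (f g : I) p : incval (incmul f g) p = if (p.1 <= p.2)%O then
      \sum_(t : X | (p.1 <= t)%O && (t <= p.2)%O) f (p.1, t) * g (t, p.2)
    else 0.
Proof. by rewrite /= ffunE. Qed.

Lemma scK (c a : K) : (c *: (a : K^o)) = c * a.
Proof. by []. Qed.

Lemma mulr_e (g : I) (c : K) (a b : X) p :
  incval (incmul g (c *: e K a b)) p =
  if (p.2 == b) && (p.1 <= a)%O && (a <= b)%O then g (p.1, a) * c else 0.
Proof.
case: p => p1 p2; rewrite valmul /=.
case H: ((p2 == b) && (p1 <= a)%O && (a <= b)%O).
  move: H => /andP [/andP [/eqP E Hpa] Hab]; subst p2.
  rewrite (le_trans Hpa Hab) (bigD1 a) /=; last by rewrite Hpa Hab.
  rewrite big1 ?addr0; first by rewrite !ffunE /= ?scK; rewrite ?eqxx Hab mulr1.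
  move=> t /andP [_ Ht]; rewrite !ffunE /= ?scK.
  by rewrite xpair_eqE (negbTE Ht) /= mulr0 mulr0.
case: ifP => // _; rewrite big1 // => t /andP [Ht1 Ht2].
rewrite !ffunE /= ?scK xpair_eqE.
case E: ((t == a) && (p2 == b) && (a <= b)%O); last by rewrite mulr0 mulr0.
move: E => /andP [/andP [/eqP Ea /eqP Eb] Hab]; subst.
by rewrite ?eqxx Ht1 Hab in H.
Qed.

Lemma mull_e (g : I) (c : K) (a b : X) p :
  incval (incmul (c *: e K a b) g) p =
  if (p.1 == a) && (b <= p.2)%O && (a <= b)%O then c * g (b, p.2) else 0.
Proof.
case: p => p1 p2; rewrite valmul /=.
case H: ((p1 == a) && (b <= p2)%O && (a <= b)%O).
  move: H => /andP [/andP [/eqP E Hpa] Hab]; subst p1.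
  rewrite (le_trans Hab Hpa) (bigD1 b) /=; last by rewrite Hpa Hab.
  rewrite big1 ?addr0; first by rewrite !ffunE /= ?scK eqxx Hab mulr1.
  move=> t /andP [_ Ht]; rewrite !ffunE /= ?scK.
  by rewrite xpair_eqE (negbTE Ht) andbF /= mulr0 mul0r.
case: ifP => // _; rewrite big1 // => t /andP [Ht1 Ht2].
rewrite !ffunE /= ?scK xpair_eqE.
case E: ((p1 == a) && (t == b) && (a <= b)%O); last by rewrite mulr0 mul0r.
move: E => /andP [/andP [/eqP Ea /eqP Eb] Hab]; subst.
by rewrite ?eqxx Ht2 Hab in H.
Qed.

Lemma lie_ez_e (z x y : X) : (x < y)%O ->
  lie (ez K z) (e K x y) = ((z == x)%:R - (z == y)%:R) *: e K x y.
Proof.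
move=> Hxy; apply: val_inj; apply/ffunP => [[p1 p2]].
have := mull_e (e K x y) 1 z z (p1,p2); have := mulr_e (e K x y) 1 z z (p1,p2).
rewrite !scale1r => H1 H2.
rewrite /lie /ez valB H1 H2 valZ !vale lexx.
rewrite /= (ltW Hxy) !andbT !xpair_eqE.
have Hne : x != y by rewrite lt_neqAle in Hxy; case/andP: Hxy.
have Hyx : (y == x) = false by rewrite eq_sym (negbTE Hne).
case: (eqVneq z x) => [?|_]; [subst z|case: (eqVneq z y) => [?|_]; [subst z|]];
(case: (eqVneq p1 x) => [?|_]; [subst p1|]);
(case: (eqVneq p2 y) => [?|_]; [subst p2|]);
rewrite /= ?Hyx ?(negbTE Hne) ?(ltW Hxy) ?lexx ?andbF ?andbT ?mul0r ?mulr0 ?mul1r ?mulr1 ?subr0 ?sub0r ?if_same ?oppr0 ?subrr ?mulN1r ?addr0 //.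
Qed.
End S.

Theorem lemma5p7 (d : Order.disp_t) (X : finPOrderType d) (K : fieldType)
    (phi : {linear incalg X K -> incalg X K}) (x y u v : X) (k : K) :
  poset_connected X ->
  elementary phi ->
  (x < y)%O ->
  (u < v)%O -> k != 0 -> phi (e K x y) = k *: e K u v ->
  forall z : X,
    (incval (phi (ez K z)) (v, v) - incval (phi (ez K z)) (u, u) : K)
      = (if z == x then -1 else if z == y then 1 else 0).
Proof.
move=> _ [[_ Hlie] _] Hxy Huv Hk Hphi z.
have H := Hlie (ez K z) (e K x y).
rewrite lie_ez_e // linearZ /= Hphi in H.
have := congr1 (fun f => incval f (u,v)) H.
rewrite /lie valB mulr_e mull_e !valZ vale /= !eqxx !lexx (ltW Huv) /= mulr1.
move=> E.
have Hc : (z == x)%:R - (z == y)%:R = incval (phi (ez K z)) (u,u) - incval (phi (ez K z)) (v,v) :> K.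
  apply: (mulIf Hk); by rewrite E mulrBl [k * _]mulrC.
have Hne : x != y by rewrite lt_neqAle in Hxy; case/andP: Hxy.
rewrite -opprB -Hc.
case: (eqVneq z x) => [?|_]; first by subst z; rewrite (negbTE Hne) subr0.
by case: (eqVneq z y) => [?|_]; rewrite ?sub0r ?subr0 ?opprK ?oppr0 ?subrr.
Qed.
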